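(* Consider the constrained perfect SEIR model described in the context. Along any barrier integral curve $(S,E,I)$ of the admissible set, with nonzero absolutely continuous adjoint $\lambda=(\lambda_1,\lambda_2,\lambda_3)^T$ satisfying $\dot\lambda=\begin{pmatrix}\beta I & -\beta I & 0\\ 0 & \eta & -\eta\\ \beta S & -\beta S & \gamma\end{pmatrix}\lambda$, $\lambda(\bar t)=(0,0,1)^T$, and inputs given by $\bar\beta(t)=\beta_{\max}$ if $\lambda_2-\lambda_1<0$, $\beta_{\min}$ if $\lambda_2-\lambda_1>0$ (arbitrary if $=0$), and $\bar\gamma(t)=\gamma_{\max}$ if $\lambda_3>0$, $\gamma_{\min}$ if $\lambda_3<0$ (arbitrary if $=0$), and whose endpoint $z=(z_1,z_2,z_3)=(S(\bar t),E(\bar t),I(\bar t))$ in the tangent set $\mathcal{T}_{\mathcal{A}}=\{(z_1,z_2,z_3):0\le z_1\le 1-z_2-z_3,\ z_2=\frac{\gamma_{\max}}{\eta}I_{\max},\ z_3=I_{\max}\}$ satisfies $z_1\neq0$, the inputs $\bar\beta$ and $\bar\gamma$ only switch at isolated points in time (i.e. neither $\lambda_2-\lambda_1$ nor $\lambda_3$ vanishes identically on any nonempty open time interval).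
   Context: Perfect SEIR model: fix $\eta>0$, $0<\beta_{\min}\le\beta_{\max}$, $0<\gamma_{\min}\le\gamma_{\max}$, $I_{\max}\in(0,1]$. State $x=(S,E,I)\in\mathbb{R}^3$, inputs Lebesgue measurable $\beta:[t_0,\infty[\to[\beta_{\min},\beta_{\max}]$, $\gamma:[t_0,\infty[\to[\gamma_{\min},\gamma_{\max}]$, dynamics $\dot S=-\beta SI$, $\dot E=\beta SI-\eta E$, $\dot I=\eta E-\gamma I$, written $\dot x=f(x,(\beta,\gamma))$, with constraint $g(x)=I-I_{\max}\le0$. The displayed adjoint equation is $\dot\lambda=-(\partial f/\partial x)^T\lambda$; the input rules come from minimizing the Hamiltonian $\lambda^Tf$ over the input box. A barrier integral curve of the admissible set is a trajectory reaching $\{I=I_{\max}\}$ tangentially at time $\bar t$ whose inputs and adjoint satisfy these conditions. *)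

(* Defs.v *)
From HB Require Import structures.
From mathcomp Require Import all_boot all_order all_algebra.
From mathcomp Require Import all_classical all_reals all_analysis.
Set Implicit Arguments. Unset Strict Implicit. Unset Printing Implicit Defensive.
Import Order.TTheory GRing.Theory Num.Theory.
Local Open Scope classical_set_scope.
Local Open Scope ring_scope.

(* Carathéodory (absolutely continuous) solution of the scalar equation
   x' = F a.e. on [a,b]: F is Lebesgue integrable on [a,b] and
   x t = x a + \int_a^t F for every t in [a,b]. *)
Definition ac_sol (R : realType) (a b : R) (x F : R -> R) : Prop :=
  (@lebesgue_measure R).-integrable `[a, b] (EFin \o F) /\
  forall t, a <= t <= b ->
    x t = x a + Rintegral (@lebesgue_measure R) `[a, t] F.

Definition admissible_input (R : realType) (t0 umin umax : R) (u : R -> R) : Prop :=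
  measurable_fun `[t0, +oo[ u /\ forall t, t0 <= t -> umin <= u t <= umax.

Definition seir_trajectory (R : realType) (eta : R) (beta gamma : R -> R)
  (a b : R) (S E I : R -> R) : Prop :=
  [/\ ac_sol a b S (fun s => - (beta s * S s * I s)),
      ac_sol a b E (fun s => beta s * S s * I s - eta * E s) &
      ac_sol a b I (fun s => eta * E s - gamma s * I s)].

(* Adjoint equation  lambda' = -(df/dx)^T lambda, i.e.
   l1' = b I l1 - b I l2,  l2' = eta l2 - eta l3,  l3' = b S l1 - b S l2 + g l3. *)
Definition seir_adjoint (R : realType) (eta : R) (beta gamma : R -> R)
  (a b : R) (S I l1 l2 l3 : R -> R) : Prop :=
  [/\ ac_sol a b l1 (fun s => beta s * I s * l1 s - beta s * I s * l2 s),
      ac_sol a b l2 (fun s => eta * l2 s - eta * l3 s) &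
      ac_sol a b l3 (fun s => beta s * S s * l1 s - beta s * S s * l2 s
                              + gamma s * l3 s)].

(* Hamiltonian-minimizing input rules. *)
Definition beta_rule (R : realType) (bmin bmax : R) (l1 l2 beta : R -> R) (t : R) :=
  (l2 t - l1 t < 0 -> beta t = bmax) /\ (l2 t - l1 t > 0 -> beta t = bmin).
Definition gamma_rule (R : realType) (gmin gmax : R) (l3 gamma : R -> R) (t : R) :=
  (l3 t > 0 -> gamma t = gmax) /\ (l3 t < 0 -> gamma t = gmin).

Definition tangent_set (R : realType) (eta gmax Imax z1 z2 z3 : R) : Prop :=
  [/\ 0 <= z1, z1 <= 1 - z2 - z3, z2 = gmax / eta * Imax & z3 = Imax].

(* Main.v *)
Require Import Defs.
From HB Require Import structures.
From mathcomp Require Import all_boot all_order all_algebra.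
From mathcomp Require Import all_classical all_reals all_analysis.
From mathcomp Require Import ring lra.
Import numFieldNormedType.Exports.
Import Order.TTheory GRing.Theory Num.Theory.
Local Open Scope classical_set_scope.
Local Open Scope ring_scope.

Section H.
Context {R : realType}.
Notation mu := (@lebesgue_measure R).

Lemma itv_cst_integrable (u v k : R) :
  mu.-integrable `[u, v] (EFin \o (fun _ => k)).
Proof.
apply: measurable_bounded_integrable => //.
- have := lebesgue_measure_itv `[u, v]; rewrite /= => ->; case: ifP => _ //; exact: ltry.
- exists `|k|; split => // M HM x _ /=; exact: ltW.
Qed.

Lemma mu_itv (u v : R) : u <= v -> mu `[u, v] = (v - u)%:E.
Proof.
move=> uv; rewrite lebesgue_measure_itv /= lte_fin.
case: ifPn => h //.
have -> : v = u by apply/eqP; rewrite eq_le uv andbT leNgt.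
by rewrite subrr.
Qed.

Lemma Rint_cst_itv (u v k : R) : u <= v ->
  Rintegral mu `[u, v] (fun _ => k) = k * (v - u).
Proof.
move=> uv; rewrite Rintegral_cst //.
congr (_ * _); rewrite -[RHS]/(fine ((v - u)%:E)); congr fine; exact: mu_itv.
Qed.

Lemma Rint_le_itv (u v M : R) (f : R -> R) : u <= v ->
  mu.-integrable `[u, v] (EFin \o f) ->
  (forall x, u <= x <= v -> f x <= M) ->
  Rintegral mu `[u, v] f <= M * (v - u).
Proof.
move=> uv If fM; rewrite -Rint_cst_itv //.
apply: le_Rintegral => //. all: try exact: itv_cst_integrable.
Qed.

Lemma Rint_ge_itv (u v m : R) (f : R -> R) : u <= v ->
  mu.-integrable `[u, v] (EFin \o f) ->
  (forall x, u <= x <= v -> m <= f x) ->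
  m * (v - u) <= Rintegral mu `[u, v] f.
Proof.
move=> uv If fM; rewrite -Rint_cst_itv //.
apply: le_Rintegral => //. all: try exact: itv_cst_integrable.
Qed.

Lemma ac_integrableS (a b u v : R) x F : ac_sol a b x F ->
  a <= u -> v <= b -> mu.-integrable `[u, v] (EFin \o F).
Proof.
move=> [If _] au vb; apply: integrableS If => //.
by apply: subset_itvScc => //=; rewrite bnd_simp.
Qed.

Lemma ac_diff (a b u v : R) x F : ac_sol a b x F ->
  a <= u -> u <= v -> v <= b -> x v - x u = Rintegral mu `[u, v] F.
Proof.
move=> [If Hx] au uv vb.
rewrite (Hx v) ?(le_trans au uv) // (Hx u) ?au ?(le_trans uv vb) //.
have -> : forall p q r : R, p + q - (p + r) = q - r by move=> *; ring.
have Iv : mu.-integrable `[a, v] (EFin \o F).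
  by apply: integrableS If => //; apply: subset_itvScc => //=; rewrite bnd_simp.
rewrite (Rintegral_itvB Iv) ?bnd_simp //.
rewrite Rintegral_itv_obnd_cbnd //.
apply: integrableS Iv => //; apply: subset_itvScc => //=; rewrite bnd_simp //.
Qed.


Lemma ac_cont (a b : R) x F : ac_sol a b x F -> a < b ->
  forall t, a < t < b -> x y @[y --> t] --> x t.
Proof.
move=> [If Hx] ab t tab.
have C := parameterized_integral_continuous (ltW ab) If.
have [Cin _ _] := (continuous_within_itvP _ ab).1 C.
have tin : t \in `]a, b[ by rewrite in_itv /=.
have Ct := Cin t tin.
have Cg : x a + parameterized_integral mu a y F @[y --> t] -->
          x a + parameterized_integral mu a t F.
  exact: cvgD (cvg_cst _) Ct.
have E : x t = x a + parameterized_integral mu a t F.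
  by case/andP: tab => at0 tb; rewrite (Hx t) // (ltW at0) (ltW tb).
rewrite E; apply: cvg_trans Cg; apply: near_eq_cvg.
have := near_in_itvoo tin; apply: filterS => y.
rewrite in_itv /= => /andP[ay yb]; rewrite (Hx y) // (ltW ay) (ltW yb).
by [].

Qed.

Lemma cont_pos (h : R -> R) t : h y @[y --> t] --> h t -> 0 < h t ->
  exists2 e, 0 < e & forall y, `|y - t| < e -> h t / 2 < h y.
Proof.
move=> Ch ht.
have := cvgr_gt _ Ch (h t / 2) ltac:(lra).
move/nbhs_ballP => [e /= e0 He]; exists e => // y yt.
apply: He; rewrite /ball /= distrC //.
Qed.

Lemma cont_neg (h : R -> R) t : h y @[y --> t] --> h t -> h t < 0 ->
  exists2 e, 0 < e & forall y, `|y - t| < e -> h y < h t / 2.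
Proof.
move=> Ch ht.
have := cvgr_lt _ Ch (h t / 2) ltac:(lra).
move/nbhs_ballP => [e /= e0 He]; exists e => // y yt.
apply: He; rewrite /ball /= distrC //.
Qed.


Lemma zero_of_int (p q m : R) (f k h : R -> R) : p < q -> 0 < m ->
  mu.-integrable `[p, q] (EFin \o f) ->
  (forall u v, p <= u -> u < v -> v <= q -> Rintegral mu `[u, v] f = 0) ->
  (forall y, p < y < q -> f y = k y * h y) ->
  (forall y, p < y < q -> m <= k y) ->
  (forall y, p < y < q -> h z @[z --> y] --> h y) ->
  forall y, p < y < q -> h y = 0.
Proof.
move=> pq m0 If Hint Hf Hk Hc y yin.
have /andP[py yq] := yin.
have key : forall e, 0 < e -> exists d, [/\ 0 < d, 2 * d < e, p < y - d & y + d < q].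
  move=> e e0.
  pose d := Num.min (e/4) (Num.min ((y - p)/2) ((q - y)/2)).
  have : d <= d := lexx d.
  rewrite {2}/d !le_min => /andP[da /andP[db dc]].
  have d0 : 0 < d by rewrite /d !lt_min; repeat (apply/andP; split); lra.
  exists d; split; lra.
have pts : forall d x, 0 < d -> p < y - d -> y + d < q -> y - d <= x <= y + d ->
   p < x < q /\ `|x - y| <= d.
  move=> d x d0 pd dq /andP[h1 h2]; split; first by apply/andP; split; lra.
  by rewrite ler_norml; apply/andP; split; lra.
have Iuv : forall d, 0 < d -> p < y - d -> y + d < q ->
    mu.-integrable `[y - d, y + d] (EFin \o f).
  move=> d d0 pd dq; apply: integrableS If => //.
  by apply: subset_itvScc; rewrite bnd_simp; lra.
case: (ltgtP (h y) 0) => // hy.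
- have [e e0 He] := @cont_neg h y (Hc y yin) hy.
  have [d [d0 de pd dq]] := key e e0.
  have := @Rint_le_itv (y - d) (y + d) (m * (h y / 2)) f ltac:(lra) (Iuv d d0 pd dq).
  rewrite Hint; [|lra|lra|lra].
  have HH : forall x, y - d <= x <= y + d -> f x <= m * (h y / 2).
    move=> x xin; have [xpq xd] := pts d x d0 pd dq xin.
    have hx : h x < h y / 2 by apply: He; lra.
    have kx := Hk x xpq; have hx0 : h x <= 0 by lra.
    rewrite Hf //.
    have -> : k x * h x = (k x - m) * h x + m * h x by ring.
    have e1 : (k x - m) * h x <= 0 by apply: mulr_ge0_le0; lra.
    have e2 : m * h x <= m * (h y / 2) by rewrite ler_pM2l //; lra.
    lra.
  move=> /(_ HH).
  have A : m * (h y / 2) < 0 by rewrite pmulr_rlt0 //; lra.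
  have B : m * (h y / 2) * (y + d - (y - d)) < 0 by rewrite pmulr_llt0 //; lra.
  lra.
- have [e e0 He] := @cont_pos h y (Hc y yin) hy.
  have [d [d0 de pd dq]] := key e e0.
  have := @Rint_ge_itv (y - d) (y + d) (m * (h y / 2)) f ltac:(lra) (Iuv d d0 pd dq).
  rewrite Hint; [|lra|lra|lra].
  have HH : forall x, y - d <= x <= y + d -> m * (h y / 2) <= f x.
    move=> x xin; have [xpq xd] := pts d x d0 pd dq xin.
    have hx : h y / 2 < h x by apply: He; lra.
    have kx := Hk x xpq; have hx0 : 0 <= h x by lra.
    rewrite Hf //.
    have -> : k x * h x = (k x - m) * h x + m * h x by ring.
    have e1 : 0 <= (k x - m) * h x by apply: mulr_ge0; lra.
    have e2 : m * (h y / 2) <= m * h x by rewrite ler_pM2l //; lra.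
    lra.
  move=> /(_ HH).
  have A : 0 < m * (h y / 2) by apply: mulr_gt0; lra.
  have B : 0 < m * (h y / 2) * (y + d - (y - d)) by apply: mulr_gt0; lra.
  lra.
Qed.


Lemma ac_bound (a b : R) x F : ac_sol a b x F -> a <= b ->
  exists B, forall t, a <= t <= b -> `|x t| <= B.
Proof.
move=> [If Hx] ab.
exists (`|x a| + Rintegral mu `[a, b] (fun s => `|F s|)) => t /andP[at0 tb].
have IF := integrable_norm If.
have Ia : mu.-integrable `[a, t] (EFin \o F).
  by apply: integrableS If => //; apply: subset_itvScc; rewrite bnd_simp.
have Iat : mu.-integrable `[a, t] (EFin \o (Num.Def.normr \o F)).
  by apply: integrableS IF => //; apply: subset_itvScc; rewrite bnd_simp.
have E1 : Rintegral mu `[a, t] (fun s => `|F s|) <= Rintegral mu `[a, b] (fun s => `|F s|).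
  have := Rintegral_itvB IF (x := t) ltac:(by rewrite bnd_simp) ltac:(by rewrite bnd_simp).
  move=> E; rewrite -subr_ge0 /=.
  have -> : Rintegral mu `[a, b] (fun s => `|F s|) - Rintegral mu `[a, t] (fun s => `|F s|)
    = Rintegral mu `]t, b] (fun s => `|F s|) by exact: E.
  by apply: Rintegral_ge0 => *.
rewrite (Hx t) ?at0 ?tb //.
apply: (le_trans (ler_normD _ _)); rewrite lerD2l.
apply: le_trans E1.
exact: (le_normr_Rintegral _ Ia).
Qed.

Lemma small_zero (y B : R) : 0 <= y -> (forall n : nat, y <= B / 2 ^+ n) -> y = 0.
Proof.
move=> y0 H; apply/eqP; rewrite eq_le y0 andbT; rewrite leNgt; apply/negP => yp.
have B0 : 0 <= B by have := H 0%N; rewrite expr0 divr1; lra.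
pose n := Num.Def.archi_bound (B / y).
have hn := @archi_boundP R (B / y) ltac:(by apply: divr_ge0; lra).
have h2 : (n%:R : R) <= 2 ^+ n.
  rewrite -(natrX R 2 n) ler_nat; exact: ltnW (ltn_expl _ _).
have := H n.
rewrite ler_pdivlMr ?exprn_gt0 //.
have : B / y * y = B by rewrite mulrVK // ?unitfE; lra.
move=> EB.
have : B < y * 2 ^+ n.
  have : B / y < 2 ^+ n by lra.
  rewrite ltr_pdivrMr //; lra.
lra.
Qed.


Lemma gronwall_zero (a b p C : R) (S F : R -> R) :
  ac_sol a b S F -> 0 <= C ->
  (forall s, a <= s <= b -> `|F s| <= C * `|S s|) ->
  a <= p -> p <= b -> S p = 0 -> S b = 0.
Proof.
move=> acS C0 HF ap pb Sp.
have ab : a <= b by apply: le_trans pb.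
have [BS HBS] := ac_bound _ _ _ _ acS ab.
have BS0 : 0 <= BS by apply: le_trans (HBS a _); rewrite ?lexx ?ab.
pose K := C + 1.
have K0 : 0 < K by rewrite /K; lra.
pose dl := 1 / (2 * K).
have dl0 : 0 < dl by rewrite /dl; apply: divr_gt0 => //; lra.
have Kdl : K * dl = 1 / 2 by rewrite /dl; field; lra.
have step : forall s, a <= s -> s <= b -> S s = 0 ->
    forall t, s <= t -> t <= b -> t <= s + dl -> S t = 0.
  move=> s as0 sb Ss t st tb tsd.
  apply/normr0_eq0; apply: (@small_zero _ BS) => //.
  move=> n; elim: n t st tb tsd => [|n IH] t st tb tsd.
    by rewrite expr0 divr1; apply: HBS; rewrite (le_trans as0 st) tb.
  have -> : S t = S t - S s by rewrite Ss subr0.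
  rewrite (ac_diff _ _ _ _ _ _ acS as0 st tb).
  have It : mu.-integrable `[s, t] (EFin \o F).
    exact: (ac_integrableS _ _ _ _ _ _ acS as0 tb).
  apply: (le_trans (le_normr_Rintegral _ It)) => //.
  pose M := BS / 2 ^+ n.
  have M0 : 0 <= M by rewrite /M; apply: divr_ge0 => //; apply: exprn_ge0.
  apply: (@le_trans _ _ ((C * M) * (t - s))).
    apply: Rint_le_itv => //; first exact: integrable_norm.
    move=> x /andP[sx xt].
    apply: (le_trans (HF x _)); first by rewrite (le_trans as0 sx) (le_trans xt tb).
    apply: ler_wpM2l => //; apply: IH => //; lra.
  have e1 : C * M * (t - s) <= K * M * dl.
    apply: ler_pM; [|lra| |lra].
    - by apply: mulr_ge0.
    - apply: ler_wpM2r => //; rewrite /K; lra.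
  apply: (le_trans e1).
  have -> : K * M * dl = M / 2 by rewrite mulrAC Kdl; field.
  have h2 : (2 : R) ^+ n != 0 by apply: expf_neq0.
  rewrite /M exprS le_eqVlt; apply/orP; left; apply/eqP; field. all: try done.
have iter : forall n : nat, forall t, p <= t -> t <= b -> t <= p + n%:R * dl -> S t = 0.
  elim=> [|n IH] t pt tb tn.
    move: tn; rewrite mul0r addr0 => tn.
    have -> : t = p by apply/eqP; rewrite eq_le tn pt.
    exact: Sp.
  case: (leP t (p + n%:R * dl)) => h; first exact: IH.
  have ns0 : 0 <= n%:R * dl by apply: mulr_ge0 => //; lra.
  apply: (step (p + n%:R * dl)) => //; try lra.
  apply: IH; lra.
pose n := Num.Def.archi_bound ((b - p) / dl).
have hn := @archi_boundP R ((b - p) / dl) ltac:(by apply: divr_ge0; lra).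
apply: (iter n) => //.
move: hn; rewrite ltr_pdivrMr //; lra.
Qed.


Lemma exists_d (p q y e : R) : p < y -> y < q -> 0 < e ->
  exists d, [/\ 0 < d, 2 * d < e, p < y - d & y + d < q].
Proof.
move=> py yq e0.
pose d := Num.min (e/4) (Num.min ((y - p)/2) ((q - y)/2)).
have : d <= d := lexx d.
rewrite {2}/d !le_min => /andP[da /andP[db dc]].
have d0 : 0 < d by rewrite /d !lt_min; repeat (apply/andP; split); lra.
exists d; split; lra.
Qed.

Lemma ac_const (a b u0 u1 : R) x F : ac_sol a b x F -> a <= u0 -> u1 <= b ->
  (forall y, u0 <= y <= u1 -> F y = 0) -> forall y, u0 <= y <= u1 -> x y = x u0.
Proof.
move=> ac au0 u1b HF y /andP[u0y yu1].
apply/eqP; rewrite -subr_eq0; apply/eqP.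
rewrite (ac_diff _ _ _ _ _ _ ac au0 u0y (le_trans yu1 u1b)).
rewrite (@eq_Rintegral _ _ _ _ _ (fun _ => 0)).
  by rewrite Rint_cst_itv // mul0r.
move=> z; rewrite inE /= in_itv /= => /andP[h1 h2]; apply: HF.
by rewrite h1 (le_trans h2 yu1).
Qed.

Lemma ac_int0 (a b u v : R) x F : ac_sol a b x F -> a <= u -> u <= v -> v <= b ->
  x v = x u -> Rintegral mu `[u, v] F = 0.
Proof.
move=> ac au uv vb E; rewrite -(ac_diff _ _ _ _ _ _ ac au uv vb) E subrr //.
Qed.

End H.

Theorem proposition3 (R : realType)
  (eta bmin bmax gmin gmax Imax : R)
  (Heta : 0 < eta) (Hb0 : 0 < bmin) (Hb : bmin <= bmax)
  (Hg0 : 0 < gmin) (Hg : gmin <= gmax) (HI0 : 0 < Imax) (HI1 : Imax <= 1)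
  (t0 tbar : R) (Ht : t0 < tbar)
  (beta gamma : R -> R) (S E I l1 l2 l3 : R -> R) :
  admissible_input t0 bmin bmax beta ->
  admissible_input t0 gmin gmax gamma ->
  seir_trajectory eta beta gamma t0 tbar S E I ->
  (forall t, t0 <= t <= tbar -> I t - Imax <= 0) ->
  seir_adjoint eta beta gamma t0 tbar S I l1 l2 l3 ->
  (forall t, t0 <= t <= tbar -> ~ [/\ l1 t = 0, l2 t = 0 & l3 t = 0]) ->
  l1 tbar = 0 -> l2 tbar = 0 -> l3 tbar = 1 ->
  (forall t, t0 <= t <= tbar -> beta_rule bmin bmax l1 l2 beta t) ->
  (forall t, t0 <= t <= tbar -> gamma_rule gmin gmax l3 gamma t) ->
  tangent_set eta gmax Imax (S tbar) (E tbar) (I tbar) ->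
  S tbar <> 0 ->
  forall a b, t0 <= a -> a < b -> b <= tbar ->
    ~ (forall t, a < t < b -> l2 t - l1 t = 0) /\
    ~ (forall t, a < t < b -> l3 t = 0).
Proof.
move=> [_ Hbeta] [_ Hgam] [acS acE acI] _ [ac1 ac2 ac3] Hnz _ _ _ _ _ _ HS a b ta ab bt.
pose p := a + (b - a) / 4.
pose q := b - (b - a) / 4.
have ap : a < p by rewrite /p; lra.
have pq : p < q by rewrite /p /q; lra.
have qb : q < b by rewrite /q; lra.
have cont : forall x F, ac_sol t0 tbar x F -> forall y, a < y < b ->
    x z @[z --> y] --> x y.
  move=> x F ac y /andP[ay yb]; apply: (ac_cont _ _ _ _ ac Ht); apply/andP; split; lra.
have Hb' : forall t, a < t < b -> bmin <= beta t.
  by move=> t /andP[at0 _]; have /andP[] := Hbeta t ltac:(lra).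
have Hg' : forall t, a < t < b -> gmin <= gamma t.
  by move=> t /andP[at0 _]; have /andP[] := Hgam t ltac:(lra).
split.
- move=> H12.
  have c1 : forall y, p <= y <= q -> l1 y = l1 p.
    apply: (ac_const _ _ _ _ _ _ ac1); try lra.
    move=> y /andP[py yq]; have := H12 y ltac:(apply/andP; split; lra).
    move=> h; have -> : l2 y = l1 y by lra.
    by rewrite subrr.
  have c2 : forall y, p <= y <= q -> l2 y = l1 p.
    move=> y yin; have := H12 y ltac:(move: yin => /andP[? ?]; apply/andP; split; lra).
    rewrite -(c1 y yin); lra.
  have z23 := @zero_of_int R p q eta (fun s => eta * l2 s - eta * l3 s)
     (fun _ => eta) (fun s => l2 s - l3 s) pq Heta
     (ac_integrableS t0 tbar p q _ _ ac2 ltac:(lra) ltac:(lra)).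
  have {}z23 : forall y, p < y < q -> l2 y - l3 y = 0.
    apply: z23.
    - move=> u v pu uv vq; apply: (ac_int0 _ _ _ _ _ _ ac2); try lra.
      by rewrite !c2 //; apply/andP; split; lra.
    - by move=> y _; ring.
    - by move=> y _; lra.
    - move=> y /andP[py yq]; have yab : a < y < b by apply/andP; split; lra.
      exact: (cvgB (cont _ _ ac2 y yab) (cont _ _ ac3 y yab)).
  pose p2 := p + (q - p) / 4.
  pose q2 := q - (q - p) / 4.
  have z3 := @zero_of_int R p2 q2 gmin
     (fun s => beta s * S s * l1 s - beta s * S s * l2 s + gamma s * l3 s)
     gamma l3 ltac:(rewrite /p2 /q2; lra) Hg0
     (ac_integrableS t0 tbar p2 q2 _ _ ac3 ltac:(rewrite /p2; lra) ltac:(rewrite /q2; lra)).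
  have {}z3 : forall y, p2 < y < q2 -> l3 y = 0.
    apply: z3.
    - move=> u v pu uv vq; apply: (ac_int0 _ _ _ _ _ _ ac3); try (rewrite /p2 /q2 in pu vq; lra).
      have e1 := z23 u ltac:(rewrite /p2 /q2 in pu vq; apply/andP; split; lra).
      have e2 := z23 v ltac:(rewrite /p2 /q2 in pu vq; apply/andP; split; lra).
      have e3 := c2 u ltac:(rewrite /p2 /q2 in pu vq; apply/andP; split; lra).
      have e4 := c2 v ltac:(rewrite /p2 /q2 in pu vq; apply/andP; split; lra).
      lra.
    - move=> y /andP[py yq].
      have := H12 y ltac:(rewrite /p2 /q2 in py yq; apply/andP; split; lra).
      move=> h; have -> : l2 y = l1 y by lra.
      by rewrite subrr add0r.
    - move=> y /andP[py yq]; apply: Hg'; rewrite /p2 /q2 in py yq; apply/andP; split; lra.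
    - move=> y /andP[py yq]; apply: (cont _ _ ac3).
      rewrite /p2 /q2 in py yq; apply/andP; split; lra.
  pose y := (p2 + q2) / 2.
  have yin : p2 < y < q2 by rewrite /y /p2 /q2; apply/andP; split; lra.
  have yin' : p < y < q by move: yin; rewrite /p2 /q2 => /andP[? ?]; apply/andP; split; lra.
  have h3 := z3 y yin.
  have h23 := z23 y yin'.
  have h12 := H12 y ltac:(move: yin'; rewrite /p /q => /andP[? ?]; apply/andP; split; lra).
  apply: (Hnz y); first by move: yin'; rewrite /p /q => /andP[? ?]; apply/andP; split; lra.
  split; lra.
- move=> H3.
  have z1 := @zero_of_int R p q bmin
     (fun s => beta s * S s * l1 s - beta s * S s * l2 s + gamma s * l3 s)
     beta (fun s => S s * (l1 s - l2 s)) pq Hb0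
     (ac_integrableS t0 tbar p q _ _ ac3 ltac:(lra) ltac:(lra)).
  have {}z1 : forall y, p < y < q -> S y * (l1 y - l2 y) = 0.
    apply: z1.
    - move=> u v pu uv vq; apply: (ac_int0 _ _ _ _ _ _ ac3); try lra.
      rewrite !H3 //; apply/andP; split; lra.
    - move=> y /andP[py yq]; rewrite (H3 y); last by apply/andP; split; lra.
      ring.
    - move=> y /andP[py yq]; apply: Hb'; apply/andP; split; lra.
    - move=> y /andP[py yq]; have yab : a < y < b by apply/andP; split; lra.
      exact: (cvgM (cont _ _ acS y yab) (cvgB (cont _ _ ac1 y yab) (cont _ _ ac2 y yab))).
  have [y1 y1in Sy1] : exists2 y1, p < y1 < q & S y1 != 0.
    case: (pselect (exists2 y1, p < y1 < q & S y1 != 0)) => // Hno.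
    exfalso; apply: HS.
    have [BI HBI] := ac_bound _ _ _ _ acI (ltW Ht).
    have BI0 : 0 <= BI by apply: le_trans (HBI t0 _); rewrite ?lexx ?(ltW Ht).
    apply: (gronwall_zero _ _ ((p + q) / 2) (bmax * BI) _ _ acS).
    - by apply: mulr_ge0 => //; lra.
    - move=> s sin; rewrite normrN !normrM.
      have /andP[bs1 bs2] := Hbeta s ltac:(by case/andP: sin).
      have nb : `|beta s| <= bmax by rewrite ger0_norm //; lra.
      have nI := HBI s sin.
      have -> : `|beta s| * `|S s| * `|I s| = (`|beta s| * `|I s|) * `|S s| by ring.
      apply: ler_wpM2r => //.
      by apply: ler_pM.
    - rewrite /p /q; lra.
    - rewrite /p /q; lra.
    - apply/eqP; apply/negP => ne; apply: Hno; exists ((p + q) / 2).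
        by apply/andP; split; lra.
      by apply/negP.
  have y1ab : a < y1 < b by move: y1in => /andP[? ?]; apply/andP; split; lra.
  have [e e0 He] : exists2 e, 0 < e & forall y, `|y - y1| < e -> S y != 0.
    case: (ltgtP (S y1) 0) => h.
    - have [e e0 He] := @cont_neg R S y1 (cont _ _ acS y1 y1ab) h.
      exists e => // y /He hy; apply/eqP => E0; lra.
    - have [e e0 He] := @cont_pos R S y1 (cont _ _ acS y1 y1ab) h.
      exists e => // y /He hy; apply/eqP => E0; lra.
    - by move: Sy1; rewrite h eqxx.
  have /andP[py1 y1q] := y1in.
  have [d [d0 de pd dq]] := exists_d _ _ _ _ py1 y1q e0.
  have eq12 : forall y, y1 - d <= y <= y1 + d -> l1 y = l2 y.
    move=> y /andP[h1 h2].
    have := z1 y ltac:(apply/andP; split; lra).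
    move/eqP; rewrite mulf_eq0 => /orP[/eqP Sy|/eqP h].
    + exfalso; have : S y != 0 by apply: He; rewrite ltr_norml; apply/andP; split; lra.
      by rewrite Sy eqxx.
    + lra.
  have c1 : forall y, y1 - d <= y <= y1 + d -> l1 y = l1 (y1 - d).
    apply: (ac_const _ _ _ _ _ _ ac1); try lra.
    move=> y yin; rewrite (eq12 y yin); ring.
  have z2 := @zero_of_int R (y1 - d) (y1 + d) eta (fun s => eta * l2 s - eta * l3 s)
     (fun _ => eta) l2 ltac:(lra) Heta
     (ac_integrableS t0 tbar (y1 - d) (y1 + d) _ _ ac2 ltac:(lra) ltac:(lra)).
  have {}z2 : forall y, y1 - d < y < y1 + d -> l2 y = 0.
    apply: z2.
    - move=> u v pu uv vq; apply: (ac_int0 _ _ _ _ _ _ ac2); try lra.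
      have hu : y1 - d <= u <= y1 + d by apply/andP; split; lra.
      have hv : y1 - d <= v <= y1 + d by apply/andP; split; lra.
      by rewrite -(eq12 u hu) -(eq12 v hv) (c1 u hu) (c1 v hv).
    - move=> y /andP[py yq]; rewrite (H3 y); last by apply/andP; split; lra.
      ring.
    - by move=> y _; lra.
    - move=> y /andP[py yq]; apply: (cont _ _ ac2); apply/andP; split; lra.
  have h2 := z2 y1 ltac:(apply/andP; split; lra).
  have h1 := eq12 y1 ltac:(apply/andP; split; lra).
  have h3 := H3 y1 y1ab.
  apply: (Hnz y1); first by apply/andP; split; lra.
  split; lra.
Qed.
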